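(* Let $k\geq 2$ be an integer and let $G_k(x,t)=\sum_{n\geq 0}\sum_{w\in[k]^n} t^{\mathrm{cs}(w)}x^n$. Put $\phi=\dfrac{1-x(t-1)}{2x(t-1)}$ and \[\gamma(x,t)=\frac{k}{1-3x(t-1)}-\frac{2x(t-1)}{(1-3x(t-1))^{2}}\cdot\frac{U_{k}(\phi)-U_{k-1}(\phi)-1}{U_{k}(\phi)}.\] Then \begin{align*} G_k(x,t)=1+\frac{1+3x(t-1)}{(1-3x(t-1))(1+x(t-1))}\Bigg[&\frac{1}{1-x\gamma(x,t)}\\ &-\frac{2x(t-1)(k+1)}{(1+3x(t-1))U_{k}(\phi)}\left(\frac{1-x\,\frac{1+k-U_{k}(\phi)}{1-3x(t-1)}}{1-x\gamma(x,t)}+U_{k-1}(\phi)-1\right)+kx(t-1)-1\Bigg]. \end{align*}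
   Context: For an integer $k\geq 2$, $[k]=\{1,2,\ldots,k\}$ and a word over $k$ of length $n$ is an element $w=w_1\cdots w_n\in[k]^n$ ($[k]^0$ consists of the empty word). For such $w$, $\mathrm{cs}(w)$ is the number of indices $0\leq i\leq n-1$ with $|w_{i+1}-w_i|\leq 1$, where $w_0$ means $w_n$ (so $\mathrm{cs}$ of the empty word is $0$ and $\mathrm{cs}(w)=1$ for a word of length $1$). $U_n$ denotes the Chebyshev polynomial of the second kind: $U_0(x)=1$, $U_1(x)=2x$, $U_{n+1}(x)=2xU_n(x)-U_{n-1}(x)$. The identity is an identity of rational functions in $x,t$ (equivalently of formal power series in $x$ with coefficients polynomial in $t$). *)

(* Defs.v *)
From HB Require Import structures.
From mathcomp Require Import all_boot all_order all_algebra.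
From mathcomp Require Import all_classical all_reals all_analysis.
Set Implicit Arguments. Unset Strict Implicit. Unset Printing Implicit Defensive.
Import Order.TTheory GRing.Theory Num.Theory.
Local Open Scope ring_scope.

Fixpoint chebU {R : ringType} (n : nat) (z : R) : R :=
  match n with
  | 0 => 1
  | 1 => 2 * z
  | (m.+1 as p).+1 => 2 * z * chebU p z - chebU m z
  end.

(* A word of length n over [k] is w : {ffun 'I_n -> 'I_k}; letter j+1 is coded
   by j : 'I_k (cs only depends on differences of letters). *)
(* cs(w) = #{ i : |w_{i+1} - w_i| <= 1 } with cyclic convention w_0 = w_n;
   in 0-based indices: pairs (w (i+1 mod n), w i). *)
Definition cs (n k : nat) (w : {ffun 'I_n -> 'I_k}) : nat :=
  #|[pred i : 'I_n | ((w (ordS i) : nat) <= (w i).+1)%N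
                     && ((w i : nat) <= (w (ordS i)).+1)%N]|.

Definition Gcoef {R : ringType} (k : nat) (t : R) (n : nat) : R :=
  \sum_(w : {ffun 'I_n -> 'I_k}) t ^+ cs w.

Definition phi {R : fieldType} (x t : R) : R :=
  (1 - x * (t - 1)) / (2 * x * (t - 1)).

Definition gamma {R : fieldType} (k : nat) (x t : R) : R :=
  let y := x * (t - 1) in
  let p := phi x t in
  k%:R / (1 - 3 * y)
  - (2 * y / (1 - 3 * y) ^+ 2) * ((chebU k p - chebU k.-1 p - 1) / chebU k p).

Definition Gk_closed {R : fieldType} (k : nat) (x t : R) : R :=
  let y := x * (t - 1) in
  let p := phi x t in
  let g := gamma k x t in
  1 + (1 + 3 * y) / ((1 - 3 * y) * (1 + y)) *
      ( 1 / (1 - x * g)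
        - (2 * y * (k.+1)%:R) / ((1 + 3 * y) * chebU k p) *
          ( (1 - x * ((1 + k%:R - chebU k p) / (1 - 3 * y))) / (1 - x * g)
            + chebU k.-1 p - 1 )
        + k%:R * y - 1 ).

(* Main.v *)
Require Import Defs.
From HB Require Import structures.
From mathcomp Require Import all_boot all_order all_algebra.
From mathcomp Require Import all_classical all_reals all_analysis.
From mathcomp Require Import ring lra zify.
Import Order.TTheory GRing.Theory Num.Theory numFieldNormedType.Exports.
Local Open Scope classical_set_scope.
Local Open Scope ring_scope.
Section Cheb.
Variable R : comNzRingType.
Variable z : R.

Fixpoint W (n : nat) : R :=
  match n with
  | 0 => 0
  | 1 => 1
  | (m.+1 as p).+1 => 2 * z * W p - W m
  end.

Lemma WSS n : W n.+2 = 2 * z * W n.+1 - W n.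
Proof. by []. Qed.
Lemma W0 : W 0 = 0. Proof. by []. Qed.
Lemma W1 : W 1 = 1. Proof. by []. Qed.
Arguments W : simpl never.

Lemma chebU_W n : chebU n z = W n.+1.
Proof.
suff : chebU n z = W n.+1 /\ chebU n.+1 z = W n.+2 by case.
elim: n => [|n [IH1 IH2]]; first by split => /=; rewrite ?WSS ?W0 ?W1; ring.
split => //.
by rewrite [LHS]/= -/(chebU n.+1 z) -/(chebU n z) IH1 IH2.
Qed.

Lemma W_add a b : W a.+1 * W b.+1 - W a * W b = W (a + b).+1.
Proof.
elim: a b => [|a IH] b; first by rewrite W0 W1 mul0r subr0 mul1r.
rewrite addSnnS -(IH b.+1) !WSS; ring.
Qed.

Lemma W_cassini n : W n.+1 ^+ 2 - W n.+2 * W n = 1.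
Proof.
elim: n => [|n IH]; first by rewrite WSS W0 W1; ring.
transitivity (W n.+1 ^+ 2 - W n.+2 * W n); last exact IH.
rewrite !WSS; ring.
Qed.

Lemma sumS n : (2 * z - 2) * (\sum_(i < n) W i.+1) = W n.+1 - W n - 1.
Proof.
elim: n => [|n IH]; first by rewrite big_ord0 W0 W1; ring.
rewrite big_ord_recr /= mulrDr IH WSS; ring.
Qed.

Lemma sumQ n : 2 * (1 - z ^+ 2) * (\sum_(i < n) W i.+1 ^+ 2)
   = n%:R + 1 - W n.+1 ^+ 2 + z * W n.+1 * W n.
Proof.
elim: n => [|n IH]; first by rewrite big_ord0 W0 W1; ring.
rewrite big_ord_recr /= mulrDr IH.
have C := W_cassini n.
rewrite WSS in C *.
apply/eqP; rewrite -subr_eq0; apply/eqP.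
rewrite -(subrr 1) -[X in _ = X - _]C -natr1; ring.
Qed.

Definition Vs n := \sum_(i < n) W i.+1 * W (n - i).

Lemma Vs_rec n : Vs n.+2 = 2 * z * Vs n.+1 - Vs n + W n.+2.
Proof.
have E1 : Vs n.+2 = \sum_(i < n.+1) W i.+1 * W (n.+2 - i) + W n.+2.
  by rewrite /Vs big_ord_recr /= subSnn W1 mulr1.
have E2 : Vs n = \sum_(i < n.+1) W i.+1 * W (n - i).
  by rewrite /Vs big_ord_recr /= subnn W0 mulr0 addr0.
have E3 : \sum_(i < n.+1) W i.+1 * W (n.+2 - i)
   = \sum_(i < n.+1) (2 * z * (W i.+1 * W (n.+1 - i)) - W i.+1 * W (n - i)).
  apply: eq_bigr => i _.
  have hi : (n.+2 - i = (n - i).+2)%N by have := ltn_ord i; lia.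
  have hi' : (n.+1 - i = (n - i).+1)%N by have := ltn_ord i; lia.
  by rewrite hi hi' WSS; ring.
by rewrite E1 E3 sumrB -mulr_sumr -E2.
Qed.

Lemma sumV n : 2 * (z ^+ 2 - 1) * Vs n = n%:R * z * W n.+1 - n.+1%:R * W n.
Proof.
suff : 2 * (z ^+ 2 - 1) * Vs n = n%:R * z * W n.+1 - n.+1%:R * W n /\
       2 * (z ^+ 2 - 1) * Vs n.+1 = n.+1%:R * z * W n.+2 - n.+2%:R * W n.+1 by case.
elim: n => [|n [IH1 IH2]].
  by rewrite /Vs !big_ord0 big_ord1 /= subn0 WSS W0 W1; split; ring.
split => //.
rewrite Vs_rec.
transitivity (2*z*(2 * (z ^+ 2 - 1) * Vs n.+1) - 2 * (z ^+ 2 - 1) * Vs n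
   + 2 * (z ^+ 2 - 1) * W n.+2); first ring.
rewrite IH1 IH2.
rewrite !WSS -!natr1; ring.
Qed.

Lemma sum_rev n (f : nat -> R) : \sum_(i < n) f (n - i)%N = \sum_(i < n) f i.+1.
Proof.
rewrite (reindex_inj rev_ord_inj) /=; apply: eq_bigr => i _.
congr f; have := ltn_ord i; lia.
Qed.

End Cheb.
Arguments W {R} z n : simpl never.
Arguments Vs {R} z n.

Definition adj (i j : nat) : bool := (j <= i.+1)%N && (i <= j.+1)%N.
Lemma adj_split (i l : nat) : adj i l = [|| l == i, l.+1 == i | l == i.+1].
Proof. rewrite /adj. case: (ltngtP l i) => h; lia. Qed.
Lemma adj_sym i l : adj i l = adj l i.
Proof. by rewrite /adj andbC. Qed.

Section Mat.
Variable R : numFieldType.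
Variables (n : nat) (x t : R).
Local Notation K := n.+1.
Local Notation y := (x * (t - 1)).
Local Notation z := ((1 - y) / (2 * y)).
Local Notation p := (W z K.+1).
Local Notation c0 := (1 / (1 - 3 * y)).
Hypothesis hx : x != 0.
Hypothesis ht : t - 1 != 0.
Hypothesis hp : p != 0.
Hypothesis h13 : 1 - 3 * y != 0.

Lemma hy : y != 0. Proof. by rewrite mulf_neq0. Qed.

Lemma zy : 2 * z * y = 1 - y.
Proof. by field; rewrite hx ht. Qed.

Lemma sum_ind (F : nat -> R) m :
  \sum_(l < K) ((l : nat) == m)%:R * F l = if (m < K)%N then F m else 0.
Proof.
case: ltnP => h.
  rewrite (bigD1 (Ordinal h)) //= eqxx mul1r big1 ?addr0 // => l hl.
  suff /negbTE -> : (l : nat) != m by rewrite mul0r.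
  by apply: contraNneq hl => e; apply/eqP/val_inj.
rewrite big1 // => l _.
suff /negbTE -> : (l : nat) != m by rewrite mul0r.
by have := ltn_ord l; lia.
Qed.

Definition prevF (F : nat -> R) (i : nat) := if i is i'.+1 then F i' else 0.

Definition Bm : 'M[R]_K := \matrix_(i, j) ((i == j :> nat)%:R - y * (adj i j)%:R).

Lemma Bsum (F : nat -> R) (i : 'I_K) : F K = 0 ->
  \sum_(l < K) Bm i l * F l = y * (2 * z * F i - prevF F i - F i.+1).
Proof.
move=> FK.
have E : forall l : 'I_K, Bm i l * F l =
   (1 - y) * (((l : nat) == i)%:R * F l) - y * (((l.+1 : nat) == i)%:R * F l)
   - y * (((l : nat) == i.+1)%:R * F l).
  move=> l; rewrite mxE adj_split eq_sym.
  case E1: ((l : nat) == i); case E2 : (l.+1 == i); case E3: ((l : nat) == i.+1);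
    rewrite /= ?mul0r ?mul1r ?mulr0 ?subr0 ?addr0; try ring; exfalso; lia.
rewrite (eq_bigr _ (fun l _ => E l)) !sumrB -!mulr_sumr !sum_ind ltn_ord.
have -> : \sum_(l < K) ((l.+1 == i)%:R * F l) = prevF F i.
  move: (ltn_ord i); case: (nat_of_ord i) => [|i'] hi /=.
    by rewrite big1 // => l _; rewrite mul0r.
  rewrite (eq_bigr (fun l : 'I_K => ((l : nat) == i')%:R * F l)) => [|l _]; last by rewrite eqSS.
  by rewrite sum_ind (ltnW hi).
have -> : (if (i.+1 < K)%N then F i.+1 else 0) = F i.+1.
  case: ltnP => //; have := ltn_ord i => h1 h2.
  by have -> : (i.+1 = K)%N by lia.
by field; rewrite hx ht.
Qed.


Definition Gf (i j : nat) : R := W z (minn i j).+1 * W z (K - maxn i j) / (p * y).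
Definition Gm : 'M[R]_K := \matrix_(i, j) Gf i j.

Lemma Gf_le i j : (i <= j)%N -> Gf i j = W z i.+1 * W z (K - j) / (p * y).
Proof. by move=> h; rewrite /Gf (minn_idPl h) (maxn_idPr h). Qed.
Lemma Gf_ge i j : (j <= i)%N -> Gf i j = W z j.+1 * W z (K - i) / (p * y).
Proof. by move=> h; rewrite /Gf (minn_idPr h) (maxn_idPl h). Qed.

Ltac fld := field; rewrite ?hx ?ht ?hp ?h13 ?hy //=.

Lemma BG : Bm *m Gm = 1%:M.
Proof.
apply/matrixP => i j; rewrite [LHS]mxE [RHS]mxE.
rewrite (eq_bigr (fun l : 'I_K => Bm i l * Gf l j)) => [|l _]; last by rewrite [Gm _ _]mxE.
rewrite (Bsum (fun l => Gf l j)); last first.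
  by rewrite Gf_ge ?subnn ?W0 ?mulr0 ?mul0r //; apply: ltnW.
case: (ltngtP i j) => [h|h|/val_inj h].
- have /negbTE -> : i != j by apply/eqP => e; move: h; rewrite e ltnn.
  have Hp : prevF (fun l => Gf l j) i = W z i * W z (K - j) / (p * y).
    move: h; case: (nat_of_ord i) => [|i'] h /=;  first by rewrite W0 !mul0r.
    by rewrite Gf_le //; apply: ltnW; apply: ltnW.
  rewrite Hp Gf_le ?Gf_le // 1?ltnW // [W z i.+2]WSS /=; fld.
- have /negbTE -> : i != j by apply/eqP => e; move: h; rewrite e ltnn.
  have hi := ltn_ord i.
  have e1 : (K - i = (K - i.+1).+1)%N by lia.
  have Hp : prevF (fun l => Gf l j) i = W z j.+1 * W z (K - i.+1).+2 / (p * y).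
    move: h e1; case: (nat_of_ord i) => [|i'] h e1 //=.
    by rewrite Gf_ge //; congr (_ * W z _ / _); lia.
  rewrite Hp (Gf_ge _ _ (ltnW h)) (Gf_ge _ _ (leqW (ltnW h))) e1 [W z (K - i.+1).+2]WSS /=; fld.
- subst j; rewrite eqxx.
  have hi := ltn_ord i.
  set m := (K - i.+1)%N.
  have e1 : (K - i = m.+1)%N by rewrite /m; lia.
  have Hp : prevF (fun l => Gf l i) i = W z i * W z m.+1 / (p * y).
    rewrite -e1; case: (nat_of_ord i) => [|i'] /=; first by rewrite W0 !mul0r.
    by rewrite Gf_le.
  rewrite Hp Gf_ge ?Gf_ge // e1.
  have WA := @W_add _ z i.+1 m.
  have e2 : (i.+1 + m = K)%N by rewrite /m; lia.
  rewrite e2 WSS in WA.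
  transitivity ((((2 * z * W z i.+1 - W z i) * W z m.+1 - W z i.+1 * W z m)) / p).
    fld.
  by rewrite WA divff.
Qed.

Definition wf (l : nat) : R := c0 * (1 - (W z l.+1 + W z (K - l)) / p).
Definition wv : 'cV[R]_K := \col_i wf i.
Definition uv : 'cV[R]_K := const_mx 1.
Definition gam : R := \sum_(i < K) wf i.
Definition Mm : 'M[R]_K := \matrix_(a, b) (if adj a b then t else 1).
Definition Nm : 'M[R]_K := Gm + (x / (1 - x * gam)) *: (wv *m wv^T).

Lemma Bw : Bm *m wv = uv.
Proof.
apply/matrixP => i j; rewrite [LHS]mxE [RHS]mxE.
rewrite (eq_bigr (fun l : 'I_K => Bm i l * wf l)) => [|l _]; last by rewrite [wv _ _]mxE.
rewrite (Bsum wf); last by rewrite /wf subnn W0 addr0 divff // subrr mulr0.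
have hi := ltn_ord i.
set m := (K - i.+1)%N.
have e1 : (K - i = m.+1)%N by rewrite /m; lia.
have Hp : prevF wf i = c0 * (1 - (W z i + W z m.+2) / p).
  rewrite -e1; move: hi; case: (nat_of_ord i) => [|i'] hi' /=.
    by rewrite subn0 W0 add0r divff // subrr mulr0.
  by rewrite /wf; congr (_ * (1 - (_ + W z _) / _)); lia.
rewrite Hp /wf e1 -/m [W z i.+2]WSS [W z m.+2]WSS; fld.
Qed.

Lemma Gsym : Gm^T = Gm.
Proof. by apply/matrixP => i j; rewrite !mxE /Gf minnC maxnC. Qed.

Lemma GB : Gm *m Bm = 1%:M.
Proof. exact: mulmx1C BG. Qed.

Lemma Gu : Gm *m uv = wv.
Proof. by rewrite -Bw mulmxA GB mul1mx. Qed.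

Lemma uG : uv^T *m Gm = wv^T.
Proof. by apply: trmx_inj; rewrite trmx_mul !trmxK Gsym Gu. Qed.

Lemma uw : uv^T *m wv = gam%:M.
Proof.
apply/matrixP => i j; rewrite (ord1 i) (ord1 j) [LHS]mxE [RHS]mxE eqxx mulr1n.
by apply: eq_bigr => l _; rewrite !mxE mul1r.
Qed.

Lemma Lsplit : 1%:M - x *: Mm = Bm - x *: (uv *m uv^T).
Proof.
apply/matrixP => i j; rewrite !mxE big_ord1 !mxE.
case: (adj i j) => /=; ring.
Qed.

Lemma LN : 1 - x * gam != 0 -> (1%:M - x *: Mm) *m Nm = 1%:M.
Proof.
move=> hg.
rewrite Lsplit /Nm mulmxDr !mulmxBl BG -scalemxAl -mulmxA uG.
rewrite -!scalemxAr -scalemxAl mulmxA Bw mulmxA -(mulmxA uv) uw mul_mx_scalar -scalemxAl.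
rewrite !scalerA -scalerBl.
have -> : x / (1 - x * gam) - x / (1 - x * gam) * x * gam = x.
  by field; rewrite hg.
by rewrite subrK.
Qed.

Lemma trN : \tr Nm = \sum_(i < K) Gf i i + (x / (1 - x * gam)) * \sum_(i < K) wf i ^+ 2.
Proof.
rewrite /Nm mxtraceD mxtraceZ; congr (_ + _ * _); apply: eq_bigr => i _.
  by rewrite mxE.
by rewrite mxE big_ord1 !mxE expr2.
Qed.


Lemma sumG : \sum_(i < K) Gf i i = Vs z K / (p * y).
Proof. by rewrite /Vs mulr_suml; apply: eq_bigr => i _; rewrite Gf_le. Qed.

Lemma gamE : gam = c0 * (K%:R - 2 * (\sum_(i < K) W z i.+1) / p).
Proof.
rewrite /gam /wf -mulr_sumr; congr (_ * _).
rewrite sumrB sumr_const card_ord -mulr_suml big_split /= (sum_rev _ K (W z)).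
rewrite -[in RHS](natr1 1); ring.
Qed.

Lemma wsqE : \sum_(i < K) wf i ^+ 2 = c0 ^+ 2 * (K%:R - 4 * (\sum_(i < K) W z i.+1) / p
   + 2 * (\sum_(i < K) W z i.+1 ^+ 2 + Vs z K) / p ^+ 2).
Proof.
have E : forall i : 'I_K, wf i ^+ 2 = c0 ^+ 2 * (1 - 2 / p * W z i.+1 - 2 / p * W z (K - i)
    + 1 / p ^+ 2 * W z i.+1 ^+ 2 + 1 / p ^+ 2 * W z (K - i) ^+ 2
    + 2 / p ^+ 2 * (W z i.+1 * W z (K - i))).
  by move=> i; rewrite /wf; fld.
rewrite (eq_bigr _ (fun i _ => E i)) -mulr_sumr; congr (_ * _).
rewrite !big_split /= !sumrN sumr_const card_ord -!mulr_sumr.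
rewrite (sum_rev _ K (W z)).
have := sum_rev _ K (fun m => W z m ^+ 2) => /= ->.
rewrite /Vs; fld.
Qed.
End Mat.
Section Comb.
Variable R : comNzRingType.
Variable k : nat.
Local Notation T := 'I_k.+1.
Variable A : 'M[R]_k.+1.

Definition pw m (w : {ffun 'I_m.+1 -> T}) : R := \prod_(i < m) A (w (inord i)) (w (inord i.+1)).

Definition hcons m (a : T) (v : {ffun 'I_m.+1 -> T}) : {ffun 'I_m.+2 -> T} :=
  [ffun i : 'I_m.+2 => if (i : nat) is j.+1 then v (inord j) else a].
Definition tl m (w : {ffun 'I_m.+2 -> T}) : {ffun 'I_m.+1 -> T} :=
  [ffun j : 'I_m.+1 => w (inord j.+1)].
Arguments tl {m} w.

Lemma hcons0 m a v : hcons m a v (inord 0) = a.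
Proof. by rewrite ffunE inordK. Qed.

Lemma hconsS m a v j : (j <= m)%N -> hcons m a v (inord j.+1) = v (inord j).
Proof. by move=> h; rewrite ffunE inordK. Qed.

Lemma tlK m a v : tl (hcons m a v) = v.
Proof.
apply/ffunP => j; have hj := ltn_ord j.
by rewrite !ffunE inordK //; apply: congr1; apply/val_inj; rewrite /= inordK.
Qed.

Lemma hconsK m a (w : {ffun 'I_m.+2 -> T}) : w (inord 0) = a -> hcons m a (tl w) = w.
Proof.
move=> e; apply/ffunP => i; rewrite ffunE.
case: i => [[|j] hj] /=.
  by rewrite -e; apply: congr1; apply/val_inj; rewrite /= inordK.
by rewrite ffunE inordK //; apply: congr1; apply/val_inj; rewrite /= inordK.
Qed.

Lemma pw_cons m a v : pw m.+1 (hcons m a v) = A a (v (inord 0)) * pw m v.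
Proof.
rewrite /pw big_ord_recl hcons0 hconsS //; congr (_ * _).
apply: eq_bigr => i _; rewrite lift0 !hconsS //; have := ltn_ord i; lia.
Qed.

Lemma pathE m a b : (A ^+ m) a b =
  \sum_(w : {ffun 'I_m.+1 -> T} | (w (inord 0) == a) && (w (inord m) == b)) pw m w.
Proof.
elim: m a => [|m IH] a.
  rewrite expr0 mxE.
  have i0 : (inord 0 : 'I_1) = ord0 by apply/val_inj; rewrite /= inordK.
  case: (eqVneq a b) => [<-|nab].
    rewrite (big_pred1 [ffun => a]) /pw ?big_ord0 // => w; rewrite andbb.
    apply/eqP/eqP => [e|->]; last by rewrite ffunE.
    by apply/ffunP => i; rewrite ffunE -e; apply: congr1; apply/val_inj; rewrite /= inordK //; case: i => [[|]].
  rewrite big_pred0 // => w.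
  by apply/negP => /andP [/eqP e1 /eqP e2]; move: nab; rewrite -e1 -e2 eqxx.
rewrite exprS mxE.
under eq_bigr => c _ do rewrite IH mulr_sumr.
rewrite (reindex_onto (hcons m a) (@tl m)); last first.
  by move=> w /andP [/eqP e _]; apply: hconsK.
rewrite [RHS](partition_big (fun v : {ffun 'I_m.+1 -> T} => v (inord 0)) xpredT) //.
apply: eq_bigr => c _.
apply: eq_big => [v|v].
  by rewrite tlK hcons0 eqxx hconsS // eqxx /= andbT andbC.
by move=> /andP [/eqP <- _]; rewrite pw_cons.
Qed.

Definition ext m (u : {ffun 'I_m.+1 -> T}) : {ffun 'I_m.+2 -> T} := [ffun i : 'I_m.+2 => u (inord i)].
Definition restr m (w : {ffun 'I_m.+2 -> T}) : {ffun 'I_m.+1 -> T} := [ffun j : 'I_m.+1 => w (inord j)].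

Lemma inord_max m : (inord m.+1 : 'I_m.+1) = ord0.
Proof. by apply/val_inj; rewrite /inord /insubd insubF //= ltnn. Qed.

Lemma inordS_ordS m (i : 'I_m.+1) : (inord i.+1 : 'I_m.+1) = ordS i.
Proof.
apply/val_inj => /=; have hi := ltn_ord i.
case: (ltngtP i.+1 m.+1) => h.
- by rewrite inordK // modn_small.
- lia.
- by rewrite h modnn inord_max.
Qed.

Lemma extE m u j : (j <= m.+1)%N -> ext m u (inord j) = u (inord j).
Proof. by move=> h; rewrite ffunE inordK. Qed.

Lemma traceE m : \tr (A ^+ m.+1) =
  \sum_(u : {ffun 'I_m.+1 -> T}) \prod_(i < m.+1) A (u i) (u (ordS i)).
Proof.
rewrite /mxtrace.
transitivity (\sum_(w : {ffun 'I_m.+2 -> T} | w (inord 0) == w (inord m.+1)) pw m.+1 w).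
  rewrite (partition_big (fun w : {ffun 'I_m.+2 -> T} => w (inord 0)) xpredT) //.
  apply: eq_bigr => a _; rewrite pathE; apply: eq_bigl => w.
  by apply/idP/idP => /andP [/eqP e1 /eqP e2]; apply/andP; split; apply/eqP; congruence.
rewrite (reindex_onto (@ext m) (@restr m)); last first.
  move=> w /eqP e; apply/ffunP => i; rewrite !ffunE.
  case: (ltnP i m.+1) => hi.
    by apply: congr1; apply/val_inj; rewrite /= !inordK.
  have -> : (inord i : 'I_m.+1) = ord0.
    have -> : (i : nat) = m.+1 by have := ltn_ord i; lia.
    exact: inord_max.
  have -> : i = inord m.+1 by apply/val_inj; rewrite /= inordK //; have := ltn_ord i; lia.
  rewrite -e; apply: congr1; apply/val_inj; rewrite /= inordK //.
apply: eq_big => [u|u _].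
  rewrite !extE // inord_max.
  have -> : (inord 0 : 'I_m.+1) = ord0 by apply/val_inj; rewrite /= inordK.
  rewrite eqxx /=; apply/eqP/ffunP => j; rewrite ffunE extE; last by have := ltn_ord j; lia.
  by apply: congr1; apply/val_inj; rewrite /= inordK.
apply: eq_bigr => i _; have hi := ltn_ord i.
rewrite !extE // ?inordS_ordS //; last by lia.
by congr (A (u _) _); apply/val_inj; rewrite /= inordK.
Qed.

End Comb.

Lemma Gcoef0 (R : comNzRingType) k (t : R) : Gcoef k t 0 = 1.
Proof.
rewrite /Gcoef (eq_bigr (fun _ => 1)) => [|w _].
  rewrite sumr_const card_ffun; have -> : #|'I_0| = 0%N by apply: eq_card0 => -[]. by rewrite expn0.
by rewrite /cs eq_card0 // => -[].
Qed.

Lemma Gcoef_tr (R : comNzRingType) n (t : R) m :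
  Gcoef n.+1 t m.+1 = \tr ((\matrix_(a, b) (if adj a b then t else 1) : 'M[R]_n.+1) ^+ m.+1).
Proof.
rewrite traceE /Gcoef; apply: eq_bigr => u _.
rewrite /cs -prodr_const big_mkcond; apply: eq_bigr => i _.
by rewrite mxE inE.
Qed.

Lemma final2 (R : numFieldType) (m : nat) (x t S Q V : R) :
  let y := x * (t - 1) in
  let z := (1 - y) / (2 * y) in
  let p := W z m.+3 in
  let q := W z m.+2 in
  let K : R := m.+2%:R in
  let c0 := 1 / (1 - 3 * y) in
  x != 0 -> t - 1 != 0 -> p != 0 -> 1 - 3 * y != 0 -> 1 + y != 0 -> 1 + 3 * y != 0 ->
  1 - x * (c0 * (K - 2 * S / p)) != 0 ->
  (2 * z - 2) * S = p - q - 1 ->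
  2 * (1 - z ^+ 2) * Q = K + 1 - p ^+ 2 + z * p * q ->
  2 * (z ^+ 2 - 1) * V = K * z * p - m.+3%:R * q ->
  Gk_closed m.+2 x t = 1 - K + (V / (p * y) + x / (1 - x * (c0 * (K - 2 * S / p)))
     * (c0 ^+ 2 * (K - 4 * S / p + 2 * (Q + V) / p ^+ 2))).
Proof.
move=> y z p q K c0 hx ht hp h1 h2 h3 hg hS hQ hV.
have hy : y != 0 by rewrite mulf_neq0.
have hz1 : 1 - z ^+ 2 = - ((1 - 3 * y) * (1 + y)) / (4 * y ^+ 2).
  by rewrite /z; field; rewrite ?hx ?ht.
have hz2 : z ^+ 2 - 1 = ((1 - 3 * y) * (1 + y)) / (4 * y ^+ 2).
  by rewrite /z; field; rewrite ?hx ?ht.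
have hz0 : 2 * z - 2 = (1 - 3 * y) / y by rewrite /z; field; rewrite ?hx ?ht.
have n1 : 2 * (1 - z ^+ 2) != 0.
  rewrite hz1 mulf_neq0 // mulf_neq0 ?oppr_eq0 ?mulf_neq0 ?invr_eq0 ?mulf_neq0 ?expf_neq0 //.
have n2 : 2 * (z ^+ 2 - 1) != 0.
  rewrite hz2 mulf_neq0 // mulf_neq0 ?mulf_neq0 ?invr_eq0 ?mulf_neq0 ?expf_neq0 //.
have n0 : 2 * z - 2 != 0 by rewrite hz0 mulf_neq0 ?invr_eq0.
have eS : S = y * (p - q - 1) / (1 - 3 * y).
  by apply: (mulfI n0); rewrite hS hz0; field; rewrite ?hx ?ht ?h1.
have eQ : Q = (K + 1 - p ^+ 2 + z * p * q) / (2 * (1 - z ^+ 2)).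
  by apply: (mulfI n1); rewrite hQ [RHS]mulrC divfK.
have eV : V = (K * z * p - (K + 1) * q) / (2 * (z ^+ 2 - 1)).
  by apply: (mulfI n2); rewrite hV [RHS]mulrC divfK // /K natr1.
rewrite /Gk_closed /gamma /phi !chebU_W /= -[2 * x * (t - 1)]mulrA -/y -/z -/p -/q -(natr1 m.+2) -/K.
rewrite eS eQ eV hz1 hz2 /c0 /z.
move: hg; rewrite eS /c0 => hg.
field; rewrite ?hx ?ht ?hp ?h1 ?h2 ?h3 ?hy /= ?andbT.
match goal with |- is_true (?E != 0) =>
  have -> : E = (1 - x * (1 / (1 - 3 * y) * (K - 2 * (y * (p - q - 1) / (1 - 3 * y)) / p)))
                * ((1 - 3 * y) ^+ 2 * p) by rewrite /K; field; rewrite ?h1 ?hp end.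
by rewrite mulf_neq0 // mulf_neq0 // expf_neq0.
Qed.

Lemma W_grow (R : realDomainType) (z : R) : 1 <= `|z| ->
  forall n, `|W z n| <= `|W z n.+1| /\ 1 <= `|W z n.+1|.
Proof.
move=> hz; elim => [|n [IH1 IH2]]; first by rewrite W0 W1 normr0 normr1.
have T := ler_normD (W z n.+2) (W z n).
have e : W z n.+2 + W z n = 2 * z * W z n.+1 by rewrite WSS; ring.
rewrite e !normrM in T.
have h2 : `|W z n.+1| <= `|z| * `|W z n.+1|.
  by rewrite -{1}(mul1r `|W z n.+1|) ler_wpM2r.
have h3 : `|2 : R| = 2 by rewrite ger0_norm.
rewrite h3 in T.
split; lra.
Qed.

Lemma mx_pow_bound (R : numDomainType) K (P : 'M[R]_K.+1) b : 0 <= b ->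
  (forall i j, `|P i j| <= b) -> forall N i j, `|(P ^+ N) i j| <= (K.+1%:R * b) ^+ N.
Proof.
move=> hb hP; elim => [|N IH] i j.
  by rewrite expr0 mxE; case: (i == j); rewrite ?normr1 ?normr0.
rewrite exprSr mxE.
apply: (le_trans (ler_norm_sum _ _ _)).
apply: (le_trans (y := \sum_(l < K.+1) (K.+1%:R * b) ^+ N * b)).
  apply: ler_sum => l _; rewrite normrM; apply: ler_pM => //.
rewrite sumr_const card_ord -mulr_natl exprSr le_eqVlt; apply/orP; left; apply/eqP; ring.
Qed.

Theorem theorem2 (R : realType) (k : nat) (t : R) :
  (2 <= k)%N -> t != 1 ->
  exists2 e : R, 0 < e &
    forall x : R, 0 < `|x| < e ->
      series (fun n => Gcoef k t n * x ^+ n) @ \oo --> Gk_closed k x t.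
Proof.
case: k => [|[|n]] // _ ht1.
have ht : t - 1 != 0 by rewrite subr_eq0.
set D := `|t| + `|t - 1| + 1.
have hD : 1 <= D by rewrite /D; have := normr_ge0 t; have := normr_ge0 (t - 1); lra.
set c := 6 * (n.+2 + 3)%:R * D.
have hK3 : 1 <= (n.+2 + 3)%:R :> R by rewrite ler1n.
have hc : 6 <= c.
  rewrite /c; nra.
have hc0 : 0 < c by apply: lt_le_trans hc.
exists c^-1; first by rewrite invr_gt0.
move=> x /andP [hx0 hxe].
have hx : x != 0 by rewrite -normr_gt0.
have key : `|x| * c < 1 by rewrite -ltr_pdivlMr // div1r.
have ax0 := normr_ge0 x.
have hcD : 6 * D <= c by rewrite /c; nra.
have hcK : 6 * (n.+2 + 3)%:R <= c by rewrite /c; nra.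
have hy6 : 6 * `|x * (t - 1)| < 1.
  rewrite normrM.
  have : `|t - 1| <= D by rewrite /D; have := normr_ge0 t; lra.
  nra.
have hyb : - (1/6) <= x * (t - 1) <= 1/6.
  by rewrite -ler_norml; lra.
move: hyb => /andP [hyl hyu].
have hy : x * (t - 1) != 0 by rewrite mulf_neq0.
have h13 : 1 - 3 * (x * (t - 1)) != 0 by apply/negbT/gt_eqF; lra.
have h1y : 1 + x * (t - 1) != 0 by apply/negbT/gt_eqF; lra.
have h3y : 1 + 3 * (x * (t - 1)) != 0 by apply/negbT/gt_eqF; lra.
set z := (1 - x * (t - 1)) / (2 * (x * (t - 1))).
have hz : 1 <= `|z|.
  rewrite /z normf_div ler_pdivlMr ?normr_gt0 ?mulf_neq0 // mul1r.
  rewrite normrM (ger0_norm (x := 2)) // (ger0_norm (x := 1 - _)); last lra.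
  lra.
have [hqp hp1] := @W_grow _ z hz n.+2.
have hp : W z n.+3 != 0 by rewrite -normr_gt0; lra.
set p := W z n.+3 in hp hp1 hqp *.
set q := W z n.+2 in hqp *.

have hz0 : 2 * z - 2 = (1 - 3 * (x * (t - 1))) / (x * (t - 1)).
  by rewrite /z; field; rewrite ?hx ?ht ?hy ?h13 ?hp.
have hS := @sumS _ z n.+2.
set S := \sum_(i < n.+2) W z i.+1 in hS.
have eS : S = (x * (t - 1)) * (p - q - 1) / (1 - 3 * (x * (t - 1))).
  have n0 : 2 * z - 2 != 0 by rewrite hz0 mulf_neq0 ?invr_eq0.
  by apply: (mulfI n0); rewrite hS hz0 -/p -/q; field; rewrite ?hx ?ht ?hy ?h13 ?hp.
set c0 := 1 / (1 - 3 * (x * (t - 1))).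
set r := (p - q - 1) / p.
set Kr : R := n.+2%:R.
have egam : gam R n.+1 x t = c0 * Kr - 2 * (x * (t - 1)) * c0 ^+ 2 * r.
  by rewrite gamE -/z -/S eS /c0 /r /Kr -/p; field; rewrite ?hx ?ht ?hy ?h13 ?hp.
have hr : `|r| <= 3.
  rewrite /r normf_div ler_pdivrMr ?normr_gt0 //.
  have t1 := ler_normB (p - q) 1; have t2 := ler_normB p q; rewrite normr1 in t1.
  lra.
have hc0p : 0 < c0 by rewrite /c0 divr_gt0 //; lra.
have hc02 : c0 <= 2 by rewrite /c0 ler_pdivrMr; lra.
have hgam : `|gam R n.+1 x t| <= 2 * Kr + 4.
  rewrite egam.
  have hK0 : 0 <= Kr by rewrite /Kr ler0n.
  have ry0 := normr_ge0 (x * (t - 1)).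
  move: hy6 ry0; set yy := x * (t - 1) => hy6' ry0.
  clearbody c0 r Kr yy.
  have T := ler_normB (c0 * Kr) (2 * yy * c0 ^+ 2 * r).
  rewrite !normrM (ger0_norm (ltW hc0p)) (ger0_norm hK0) (ger0_norm (x := 2)) // in T.
  have rr0 := normr_ge0 r.
  have b1 : c0 * c0 <= 4 by nra.
  have b2 : `|yy| * (c0 * c0) <= 1 / 6 * 4.
    by apply: ler_pM => //; [exact: mulr_ge0 (ltW hc0p) (ltW hc0p) | lra].
  have b3 : `|yy| * (c0 * c0) * `|r| <= 1 / 6 * 4 * 3.
    by apply: ler_pM => //; apply: mulr_ge0 => //; exact: mulr_ge0 (ltW hc0p) (ltW hc0p).
  have b4 : c0 * Kr <= 2 * Kr by apply: ler_wpM2r.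
  nra.
have hxg : `|x * gam R n.+1 x t| < 1.
  rewrite normrM.
  rewrite natrD -/Kr in hcK.
  have hK0 : 0 <= Kr by rewrite /Kr ler0n.
  nra.
have hg : 1 - x * gam R n.+1 x t != 0.
  apply/eqP => E; move: hxg; have -> : x * gam R n.+1 x t = 1.
    by apply/eqP; rewrite -subr_eq0 -oppr_eq0 opprB E.
  by rewrite normr1 ltxx.
have hLN := @LN R n.+1 x t hx ht hp h13 hg.
set Mt := Mm R n.+1 t in hLN.
set Nt := Nm R n.+1 x t in hLN.
have hNL : Nt *m (1%:M - x *: Mt) = 1%:M := mulmx1C hLN.
set P := x *: Mt in hNL.
have hgeo : forall N, \sum_(i < N.+1) P ^+ i = Nt *m (1%:M - P ^+ N.+1).
  move=> N.
  have E : 1%:M - P ^+ N.+1 = (1%:M - P) *m \sum_(i < N.+1) P ^+ i.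
    have one : (1%:M : 'M[R]_n.+2) = 1 by [].
    by rewrite one -[1 - _]opprB subrX1 -mulNr opprB mulmxE.
  by rewrite E mulmxA hNL mul1mx.
pose f := fun N => Gcoef n.+2 t N * x ^+ N.
have hser : forall N, series f N.+1 = 1 - n.+2%:R + \tr Nt - \tr (Nt *m P ^+ N.+1).
  move=> N.
  have := congr1 (@mxtrace R n.+2) (hgeo N).
  rewrite mulmxBr mulmx1 raddfB /= raddf_sum /= => E.
  rewrite -addrA -E big_ord_recl expr0 mxtrace1.
  rewrite /series /= big_mkord big_ord_recl /f Gcoef0 expr0 mulr1.
  rewrite addrA subrK; congr (_ + _); apply: eq_bigr => i _.
  rewrite lift0 /bump leq0n add1n /P exprZn mxtraceZ Gcoef_tr mulrC.
  by [].
set qq := n.+2%:R * (`|x| * (`|t| + 1)).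
have hq0 : 0 <= qq by rewrite /qq mulr_ge0 // mulr_ge0 // addr_ge0.
have hq1 : qq < 1.
  have h1 : `|t| + 1 <= D by rewrite /D; have := normr_ge0 (t - 1); lra.
  have h2 : n.+2%:R <= (n.+2 + 3)%:R :> R by rewrite ler_nat leq_addr.
  have h0 : 0 <= n.+2%:R :> R by rewrite ler0n.
  have h3 := normr_ge0 t.
  have h5 : n.+2%:R * (`|t| + 1) <= (n.+2 + 3)%:R * D.
    by apply: ler_pM => //; lra.
  have h6 : 0 <= (n.+2 + 3)%:R * D :> R by apply: mulr_ge0; [rewrite ler0n | lra].
  have h4 : n.+2%:R * (`|t| + 1) <= c by rewrite /c -mulrA; lra.
  have -> : qq = `|x| * (n.+2%:R * (`|t| + 1)) by rewrite /qq mulrCA.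
  apply: le_lt_trans key; exact: ler_wpM2l.
have hPb : forall i j, `|P i j| <= `|x| * (`|t| + 1).
  move=> i j; rewrite /P mxE normrM ler_wpM2l // /Mt /Mm mxE.
  by case: adj; have := normr_ge0 t; rewrite ?normr1; lra.
have hb0 : 0 <= `|x| * (`|t| + 1) by rewrite mulr_ge0 // addr_ge0.
have hPow := @mx_pow_bound R n.+1 P _ hb0 hPb.
set C := \sum_(i < n.+2) \sum_(l < n.+2) `|Nt i l|.
have hh : forall N, `|\tr (Nt *m P ^+ N.+1)| <= C * qq ^+ N.+1.
  move=> N; rewrite /mxtrace /C mulr_suml.
  apply: (le_trans (ler_norm_sum _ _ _)); apply: ler_sum => i _.
  rewrite mxE mulr_suml.
  apply: (le_trans (ler_norm_sum _ _ _)); apply: ler_sum => l _.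
  by rewrite normrM ler_wpM2l.
have hlim : (fun N => \tr (Nt *m P ^+ N.+1)) @ \oo --> 0.
  apply: norm_cvg0.
  apply: (@squeeze_cvgr _ _ _ _ (fun _ => 0) (fun N => C * qq ^+ N.+1)).
  - by apply: nearW => N; rewrite normr_ge0 hh.
  - exact: cvg_cst.
  - have hqn : `|qq| < 1 by rewrite ger0_norm.
    have := cvgMl_tmp (a := C * qq) (@cvg_expr R qq hqn).
    rewrite mulr0 => H.
    have -> : (fun N => C * qq ^+ N.+1) = (fun N => C * qq * qq ^+ N).
      by apply/funext => N; rewrite exprS mulrA.
    exact: H.
have hg' : 1 - x * (1 / (1 - 3 * (x * (t - 1))) * (n.+2%:R - 2 * (\sum_(i < n.+2) W z i.+1) / W z n.+3)) != 0.
  by move: hg; rewrite gamE.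
have HL : Gk_closed n.+2 x t = 1 - n.+2%:R + \tr Nt.
  rewrite /Nt trN sumG gamE wsqE //.
  apply: (@final2 R n x t (\sum_(i < n.+2) W z i.+1) (\sum_(i < n.+2) W z i.+1 ^+ 2)
     (Vs z n.+2)) => //.
  - exact: (@sumQ _ z n.+2).
  - exact: (@sumV _ z n.+2).
rewrite -cvg_shiftS HL.
have -> : [sequence series (fun n0 => Gcoef n.+2 t n0 * x ^+ n0) N.+1]_N
   = (fun N => 1 - n.+2%:R + \tr Nt - \tr (Nt *m P ^+ N.+1)).
  by apply/funext => N; rewrite /= -hser.
have H := cvgB (cvg_cst (1 - n.+2%:R + \tr Nt)) hlim.
rewrite subr0 in H.
exact: H.
Qed.
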